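(* Let $m$ be a positive integer and suppose that complex numbers $c_0,c_1,\dots,c_{2m+1}$ satisfy, identically as meromorphic functions of $s\in\mathbb{C}$, $$c_{2m+1}\zeta(-2m-1,s+2m+1)+\cdots+c_1\zeta(-1,s+1)+c_0\,\zeta(0,s)/2\equiv0.$$ Then $c_0+c_1+c_2+\cdots+c_{2m+1}=0$.
   Context: For an integer $c\ge 0$, $\zeta(-c,s+c)$ denotes the Euler–Zagier double zeta function $\zeta(s_1,s_2)=\sum_{1\le n_1<n_2} n_1^{-s_1}n_2^{-s_2}$ evaluated at $(s_1,s_2)=(-c,s+c)$; i.e. it is the meromorphic continuation to all $s\in\mathbb{C}$ of the series $\sum_{m,n\ge1} m^{c}(m+n)^{-s-c}$, which converges absolutely for $\Re(s)>2$. *)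

(* Defs.v *)
From Stdlib Require Import Reals.
From Coquelicot Require Import Coquelicot.
Open Scope R_scope.

(* n^{-s} := exp(-s log n) for a positive integer n and complex s. *)
Definition npow_neg (n : nat) (s : Complex.C) : Complex.C :=
  let t := ln (INR n) in
  (exp (- Re s * t) * cos (- Im s * t), exp (- Re s * t) * sin (- Im s * t)).

(* Value of a complex series, taken componentwise (Coquelicot's Series is real). *)
Definition CSeries (a : nat -> Complex.C) : Complex.C :=
  (Series (fun k => Re (a k)), Series (fun k => Im (a k))).

(* Terms of sum_{m,n>=1} m^c (m+n)^{-s-c}, grouped by N = m + n:
   the N-th term is sum_{m=1}^{N-1} m^c N^{-(s+c)} (empty for N <= 1). *)
Definition dz_term (c : nat) (s : Complex.C) (N : nat) : Complex.C :=
  Cmult (sum_n (fun m => if (1 <=? m)%nat then RtoC (INR m ^ c) else RtoC 0) (N - 1)%nat)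
        (npow_neg N (Cplus s (RtoC (INR c)))).

(* zeta(-c, s+c) for Re s > 2, where the double series converges absolutely. *)
Definition dzeta (c : nat) (s : Complex.C) : Complex.C :=
  CSeries (dz_term c s).

(* Main.v *)
Require Import Defs.
From Stdlib Require Import Reals Lra Lia Psatz Wf_nat.
From Coquelicot Require Import Coquelicot.
Open Scope R_scope.

Lemma tangent (k : nat) (a b : R) : 0 <= a <= b ->
  INR (S k) * a ^ k * (b - a) <= b ^ S k - a ^ S k <= INR (S k) * b ^ k * (b - a).
Proof.
  intros [Ha Hab]. induction k as [|k IH].
  - simpl. lra.
  - assert (Hak : 0 <= a ^ k) by (apply pow_le; lra).
    assert (Hakb : a ^ S k <= b ^ S k) by (apply pow_incr; lra).
    assert (Hk : a ^ k <= b ^ k) by (apply pow_incr; lra).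
    assert (E : b ^ S (S k) - a ^ S (S k) = b * (b ^ S k - a ^ S k) + a ^ S k * (b - a))
      by (simpl; ring_simplify; ring).
    rewrite E. rewrite !S_INR in *.
    change (a ^ S k) with (a * a ^ k) in *. change (b ^ S k) with (b * b ^ k) in *.
    destruct IH as [IH1 IH2].
    assert (0 <= INR k) by apply pos_INR.
    assert (P1 : b * (INR k + 1) * a ^ k * (b - a) <= b * (b * b ^ k - a * a ^ k)).
    { replace (b * (INR k + 1) * a ^ k * (b - a)) with (b * ((INR k + 1) * a ^ k * (b - a))) by ring.
      apply Rmult_le_compat_l; lra. }
    assert (P2 : b * (b * b ^ k - a * a ^ k) <= b * ((INR k + 1) * b ^ k * (b - a))).
    { apply Rmult_le_compat_l; lra. }
    assert (P3 : 0 <= (b - a) * (INR k + 1) * a ^ k * (b - a)).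
    { apply Rmult_le_pos; [|lra]. apply Rmult_le_pos; [|lra]. apply Rmult_le_pos; lra. }
    assert (P4 : 0 <= (b - a) * (b ^ k - a^k) ) by (apply Rmult_le_pos; lra).
    assert (P5 : 0 <= (b - a) * (b * b ^ k - a * a ^ k)) by (apply Rmult_le_pos; lra).
    split; lra.
Qed.

Definition Ek (k : nat) (x : R) : R :=
  INR (S k) * (x ^ k + (x+1) ^ k) - 2 * ((x+1) ^ S k - x ^ S k).

Lemma Ek_rec (k : nat) (x : R) :
  Ek (S k) x = ((x+1) ^ S k - x ^ S k - INR (S k) * x ^ k) + (x+1) * Ek k x.
Proof.
  unfold Ek. rewrite !S_INR. simpl. ring.
Qed.

Lemma Ek_nonneg (k : nat) (x : R) : 0 <= x -> 0 <= Ek k x.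
Proof.
  intros Hx. induction k as [|k IH].
  - unfold Ek. simpl. lra.
  - rewrite Ek_rec. destruct (tangent k x (x+1)) as [T1 T2]; [lra|].
    assert (0 <= (x+1) * Ek k x) by (apply Rmult_le_pos; lra).
    nra.
Qed.

Lemma Ek_upper (k : nat) : exists C, 0 <= C /\ forall x, 0 <= x -> Ek (S (S k)) x <= C * (x+1) ^ k.
Proof.
  induction k as [|k [C [HC IH]]].
  - exists 2. split; [lra|]. intros x Hx. replace (Ek 2 x) with 1 by (unfold Ek; simpl; ring). simpl; lra.
  - exists (INR (S (S (S k))) * INR (S (S k)) + C). split.
    { assert (0 <= INR (S (S (S k))) * INR (S (S k))) by (apply Rmult_le_pos; apply pos_INR). lra. }
    intros x Hx. rewrite Ek_rec.
    destruct (tangent (S (S k)) x (x+1)) as [T1 T2]; [lra|].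
    destruct (tangent (S k) x (x+1)) as [U1 U2]; [lra|].
    specialize (IH x Hx).
    assert (H0 : 0 <= x ^ S (S k)) by (apply pow_le; lra).
    assert (H1 : 0 <= INR (S (S (S k)))) by apply pos_INR.
    assert (H2 : (x + 1) ^ S (S (S k)) - x ^ S (S (S k)) - INR (S (S (S k))) * x ^ S (S k)
                 <= INR (S (S (S k))) * ((x+1) ^ S (S k) - x ^ S (S k))).
    { replace ((x + 1 - x)) with 1 in T2 by ring. lra. }
    replace ((x + 1 - x)) with 1 in U2 by ring.
    assert (H3 : INR (S (S (S k))) * ((x+1) ^ S (S k) - x ^ S (S k)) <=
                 INR (S (S (S k))) * (INR (S (S k)) * (x + 1) ^ S k)).
    { apply Rmult_le_compat_l; lra. }
    assert (H4 : (x+1) * Ek (S (S k)) x <= (x+1) * (C * (x+1)^k)).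
    { apply Rmult_le_compat_l; lra. }
    change ((x+1) ^ S k) with ((x+1) * (x+1)^k) in *.
    nra.
Qed.

Fixpoint asum (k N : nat) : R :=
  match N with
  | O => 0
  | S N' => asum k N' + (if (1 <=? N')%nat then INR N' ^ k else 0)
  end.

Lemma asum_S k N : asum k (S N) = asum k N + (if (1 <=? N)%nat then INR N ^ k else 0).
Proof. reflexivity. Qed.

Definition hh (k N : nat) : R := INR (S k) * (2 * asum k N + INR N ^ k) - 2 * INR N ^ S k.

Lemma if_pow (j N : nat) : (if (1 <=? N)%nat then INR N ^ S j else 0) = INR N ^ S j.
Proof. destruct N; simpl; [ring | reflexivity]. Qed.

Lemma hh_step (j N : nat) : hh (S j) (S N) = hh (S j) N + Ek (S j) (INR N).
Proof.
  unfold hh, Ek. rewrite asum_S, if_pow. rewrite (S_INR N). 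
  replace (S (S j)) with (S (S j)) by reflexivity. simpl pow. ring.
Qed.

Lemma Ek1 (x : R) : Ek 1 x = 0.
Proof. unfold Ek. simpl. ring. Qed.

Lemma AL (j : nat) : exists C, 0 <= C /\ forall N, 0 <= hh (S j) N <= C * INR N ^ j.
Proof.
  destruct j as [|j].
  - exists 0. split; [lra|]. intros N. induction N as [|N IH].
    + unfold hh. simpl. lra.
    + rewrite hh_step, Ek1. simpl. simpl in IH. lra.
  - destruct (Ek_upper j) as [C [HC HE]]. exists C. split; [exact HC|].
    intros N. induction N as [|N IH].
    + unfold hh. simpl. lra.
    + rewrite hh_step. 
      assert (H0 : 0 <= INR N) by apply pos_INR.
      pose proof (Ek_nonneg (S (S j)) (INR N) H0).
      specialize (HE (INR N) H0).
      rewrite S_INR.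
      assert (Hp : INR N ^ j <= (INR N + 1) ^ j) by (apply pow_incr; lra).
      assert (Hq : C * (INR N * INR N ^ j) <= C * (INR N * (INR N + 1) ^ j)).
      { apply Rmult_le_compat_l; [lra|]. apply Rmult_le_compat_l; lra. }
      simpl pow in *. destruct IH. split. lra.
      replace (C * ((INR N + 1) * (INR N + 1) ^ j)) with (C * (INR N * (INR N + 1) ^ j) + C * (INR N + 1) ^ j) by ring. lra.
Qed.

Lemma asum_nonneg k N : 0 <= asum k N.
Proof.
  induction N; [simpl; lra|]. rewrite asum_S. destruct (1 <=? N)%nat; [|lra].
  pose proof (pow_le (INR N) k (pos_INR N)). lra.
Qed.

Lemma asum_le k N : asum k N <= INR N * INR N ^ k.
Proof.
  induction N as [|N IHN]; [simpl; lra|]. rewrite asum_S. destruct N as [|N'].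
  - simpl. rewrite pow1. lra.
  - change (1 <=? S N')%nat with true. cbv iota.
    rewrite (S_INR (S N')).
    set (x := INR (S N')) in *.
    assert (H0 : 0 <= x) by apply pos_INR.
    assert (Hp : x ^ k <= (x + 1) ^ k) by (apply pow_incr; lra).
    assert (Hq : 0 <= x ^ k) by (apply pow_le; lra).
    assert (x * x ^ k <= x * (x + 1) ^ k) by (apply Rmult_le_compat_l; lra).
    replace ((x + 1) * (x + 1) ^ k) with (x * (x + 1) ^ k + (x + 1) ^ k) by ring.
    lra.
Qed.

Lemma asum0 N : (1 <= N)%nat -> asum 0 N = INR N - 1.
Proof.
  intros HN. induction N as [|N IH]; [lia|].
  destruct N as [|N].
  - simpl. lra.
  - rewrite asum_S, IH by lia. change (1 <=? S N)%nat with true. cbv iota.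
    rewrite (S_INR (S N)). simpl pow. ring.
Qed.

Definition beta (k : nat) : R := if (1 <=? k)%nat then - / 2 else -1.

Definition ep (k N : nat) : R := asum k N / INR N ^ k - INR N / INR (S k) - beta k.

Lemma ep_bound (k : nat) : exists C, 0 <= C /\ forall N, (1 <= N)%nat -> Rabs (ep k N) <= C / INR N.
Proof.
  destruct k as [|j].
  - exists 0. split; [lra|]. intros N HN. unfold ep, beta. rewrite asum0 by auto.
    simpl. replace ((INR N - 1) / 1 - INR N / 1 - -1) with 0 by field.
    rewrite Rabs_R0. unfold Rdiv. lra.
  - destruct (AL j) as [C [HC HA]]. exists C. split; [exact HC|]. intros N HN.
    assert (HNp : 0 < INR N) by (apply lt_0_INR; lia).
    assert (Hpj : 0 < INR N ^ j) by (apply pow_lt; lra).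
    assert (Hk : 0 < INR (S (S j))) by (apply lt_0_INR; lia).
    assert (E : ep (S j) N = hh (S j) N / (2 * INR (S (S j)) * INR N ^ S j)).
    { unfold ep, hh, beta. simpl (1 <=? S j)%nat. cbv iota. simpl pow. field. lra. }
    rewrite E. destruct (HA N) as [H1 H2].
    rewrite Rabs_pos_eq.
    2: { apply Rmult_le_pos; [lra|]. apply Rlt_le, Rinv_0_lt_compat.
         apply Rmult_lt_0_compat; [lra|]. apply pow_lt; lra. }
    simpl pow. apply Rle_trans with (C * INR N ^ j / (2 * INR (S (S j)) * (INR N * INR N ^ j))).
    { unfold Rdiv. apply Rmult_le_compat_r; [|lra]. apply Rlt_le, Rinv_0_lt_compat.
      apply Rmult_lt_0_compat; [lra|]. apply Rmult_lt_0_compat; lra. }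
    replace (C * INR N ^ j / (2 * INR (S (S j)) * (INR N * INR N ^ j)))
      with ((C / INR N) * / (2 * INR (S (S j)))) by (field; lra).
    assert (HS : 1 <= INR (S (S j))) by (rewrite !S_INR; pose proof (pos_INR j); lra).
    assert (0 <= C / INR N) by (apply Rmult_le_pos; [lra| apply Rlt_le, Rinv_0_lt_compat; lra]).
    assert (/ (2 * INR (S (S j))) <= 1).
    { rewrite <- Rinv_1. apply Rinv_le_contravar; lra. }
    nra.
Qed.

Definition bb (N : nat) : R := / INR N ^ 2.
Definition cc (N : nat) : R := / (INR N * (INR N + 1)).

Lemma sum_cc n : sum_n cc n = 1 - / (INR n + 1).
Proof.
  induction n as [|n IH].
  - rewrite sum_O. unfold cc. simpl. rewrite Rmult_0_l, Rinv_0. field.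
  - rewrite sum_Sn, IH. unfold cc. rewrite (S_INR n). change plus with Rplus. match goal with |- ?a = ?b => change (@eq R a b) end.
    assert (0 <= INR n) by apply pos_INR. field; repeat split; lra.
Qed.

Lemma ex_cc : ex_series cc.
Proof.
  exists 1. unfold is_series.
  apply (filterlim_ext (fun n => 1 - / (INR n + 1))).
  { intros n. now rewrite sum_cc. }
  change (is_lim_seq (fun n => 1 - / (INR n + 1)) 1).
  assert (H : is_lim_seq (fun n => 1 - / (INR n + 1)) (1 - 0)); [|now rewrite Rminus_0_r in H].
  apply (is_lim_seq_minus' (fun _ => 1) (fun n => / (INR n + 1)) 1 0).
  - apply is_lim_seq_const.
  - apply (is_lim_seq_ext (fun n => / INR (S n))). { intros; now rewrite S_INR. }
    apply (is_lim_seq_incr_1 (fun n => / INR n) 0).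
    apply (is_lim_seq_inv INR p_infty). apply is_lim_seq_INR. discriminate.
Qed.

Lemma bb_le N : 0 <= bb N <= 2 * cc N.
Proof.
  unfold bb, cc. destruct N as [|N].
  - simpl. rewrite !Rmult_0_l, Rinv_0. lra.
  - assert (H : 1 <= INR (S N)) by (apply (le_INR 1); lia).
    split.
    + apply Rlt_le, Rinv_0_lt_compat, pow_lt. lra.
    + simpl pow. rewrite Rmult_1_r.
      replace (2 * / (INR (S N) * (INR (S N) + 1))) with (/ (INR (S N) * ((INR (S N) + 1)/2))) by (field; lra).
      apply Rinv_le_contravar.
      * apply Rmult_lt_0_compat; lra.
      * change (INR (S N) * ((INR (S N) + 1) / 2) <= INR (S N) * INR (S N)). apply Rmult_le_compat_l; lra.
Qed.

Lemma ex_bb : ex_series bb.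
Proof.
  apply (ex_series_le bb (fun n => 2 * cc n)).
  - intros n. unfold norm; simpl. unfold abs; simpl. destruct (bb_le n). rewrite Rabs_pos_eq; lra.
  - apply (ex_series_scal_l 2 cc). apply ex_cc.
Qed.

Lemma ex_series_bound (u : nat -> R) (K : R) : (forall N, Rabs (u N) <= K * bb N) -> ex_series u.
Proof.
  intros H. apply (ex_series_le u (fun n => K * bb n)).
  - intros n. unfold norm; simpl. unfold abs; simpl. apply H.
  - apply (ex_series_scal_l K bb). apply ex_bb.
Qed.

Lemma L1 (y : R) (i : nat) : 1 <= y -> y / y ^ (i + 3) <= / y ^ 2.
Proof.
  intros Hy. rewrite pow_add.
  assert (H1 : 1 <= y ^ i) by (apply pow_R1_Rle; lra).
  replace (y / (y ^ i * y ^ 3)) with (/ y ^ 2 * / y ^ i) by (field; split; [lra|]; apply pow_nonzero; lra).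
  assert (0 < / y ^ 2) by (apply Rinv_0_lt_compat, pow_lt; lra).
  assert (/ y ^ i <= 1) by (rewrite <- Rinv_1; apply Rinv_le_contravar; lra).
  nra.
Qed.

Lemma L2 (x y : R) (i : nat) : 1 <= x -> x + 1 <= y ->
  x ^ (i + 3) * y / y ^ (i + 3) <= x ^ 3 * (x / (x + 1)) ^ i / y ^ 2.
Proof.
  intros Hx Hy.
  assert (Hyi : y ^ i <> 0) by (apply pow_nonzero; lra).
  replace (x ^ (i + 3) * y / y ^ (i + 3)) with ((x / y) ^ i * (x ^ 3 / y ^ 2)).
  2: { unfold Rdiv. rewrite Rpow_mult_distr, pow_inv, !pow_add. field. split; lra. }
  replace (x ^ 3 * (x / (x + 1)) ^ i / y ^ 2) with ((x / (x + 1)) ^ i * (x ^ 3 / y ^ 2)) by (field; lra).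
  apply Rmult_le_compat_r.
  - apply Rmult_le_pos; [apply pow_le; lra|]. apply Rlt_le, Rinv_0_lt_compat, pow_lt; lra.
  - apply pow_incr. split.
    + apply Rmult_le_pos; [lra|]. apply Rlt_le, Rinv_0_lt_compat; lra.
    + apply Rmult_le_compat_l; [lra|]. apply Rinv_le_contravar; lra.
Qed.

Lemma L3 (a D q : R) : 0 <= D -> 0 <= q < 1 -> (forall i, Rabs a <= D * q ^ i) -> a = 0.
Proof.
  intros HD Hq H.
  destruct (Req_dec a 0) as [|Ha]; [assumption|].
  assert (Hpos : 0 < Rabs a) by (apply Rabs_pos_lt; exact Ha).
  destruct (pow_lt_1_zero q ltac:(rewrite Rabs_pos_eq; lra) (Rabs a / (D + 1))) as [n Hn].
  { apply Rmult_lt_0_compat; [lra|]. apply Rinv_0_lt_compat; lra. }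
  specialize (Hn n (le_n n)). specialize (H n).
  rewrite Rabs_pos_eq in Hn by (apply pow_le; lra).
  assert (Hqn : 0 <= q ^ n) by (apply pow_le; lra).
  assert ((D + 1) * q ^ n < Rabs a).
  { apply Rmult_lt_compat_l with (r := D + 1) in Hn; [|lra].
    replace ((D + 1) * (Rabs a / (D + 1))) with (Rabs a) in Hn by (field; lra). exact Hn. }
  nra.
Qed.

Lemma ex_bb_shift (M : nat) (c : R) : ex_series (fun k => c * bb (M + S k)).
Proof.
  apply (ex_series_scal_l c (fun k => bb (M + S k))).
  apply (ex_series_incr_n (fun k => bb (M + k)) 1). apply (ex_series_incr_n bb M). apply ex_bb.
Qed.

Lemma DU (f : nat -> R) (K : R) : 0 <= K -> f 0%nat = 0 ->
  (forall N, Rabs (f N) <= K * INR N) ->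
  (forall i, Series (fun N => f N / INR N ^ (i + 3)) = 0) ->
  forall N, f N = 0.
Proof.
  intros HK H0 Hb HS.
  assert (Hu : forall i N, Rabs (f N / INR N ^ (i + 3)) <= K * bb N).
  { intros i N. destruct N as [|N].
    - rewrite H0. unfold Rdiv. rewrite Rmult_0_l, Rabs_R0.
      apply Rmult_le_pos; [lra|]. apply bb_le.
    - assert (Hy : 1 <= INR (S N)) by (apply (le_INR 1); lia).
      unfold Rdiv. rewrite Rabs_mult, (Rabs_pos_eq (/ _)) by (apply Rlt_le, Rinv_0_lt_compat, pow_lt; lra).
      apply Rle_trans with (K * INR (S N) * / INR (S N) ^ (i + 3)).
      + apply Rmult_le_compat_r; [apply Rlt_le, Rinv_0_lt_compat, pow_lt; lra|]. apply Hb.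
      + rewrite Rmult_assoc. apply Rmult_le_compat_l; [lra|]. unfold bb. apply L1. lra. }
  intros N. induction N as [N IH] using (well_founded_induction lt_wf).
  destruct N as [|M']; [exact H0|].
  set (M := S M') in *.
  set (x := INR M).
  assert (Hx : 1 <= x) by (apply (le_INR 1); unfold M; lia).
  set (S2 := Series (fun k => bb (M + S k))).
  apply (L3 (f M) (K * x ^ 3 * S2) (x / (x + 1))).
  - apply Rmult_le_pos; [apply Rmult_le_pos; [lra| apply pow_le; lra]|].
    unfold S2. apply Rle_trans with (Series (fun _ => 0)).
    { assert (Z : Series (fun _ : nat => 0) = 0).
      { transitivity (Series (fun n : nat => 0 * (fun _ : nat => 0) n)).
        - apply Series_ext. intros; ring.
        - rewrite (Series_scal_l 0 (fun _ : nat => 0)). ring. }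
      rewrite Z. lra. }
    apply Series_le. { intros n. split; [lra|]. apply bb_le. }
    apply (ex_series_incr_n (fun k => bb (M + k)) 1). apply (ex_series_incr_n bb M). apply ex_bb.
  - split. { apply Rmult_le_pos; [lra|]. apply Rlt_le, Rinv_0_lt_compat; lra. }
    apply (Rmult_lt_reg_r (x + 1)); [lra|]. unfold Rdiv. rewrite Rmult_assoc, Rinv_l by lra. lra.
  - intros i.
    set (u := fun N => f N / INR N ^ (i + 3)).
    assert (Hex : ex_series u) by (apply (ex_series_bound u K); apply Hu).
    assert (E1 : Series u = Series (fun k => u (M + k)%nat)).
    { apply Series_incr_n_aux. intros k Hk. unfold u. rewrite (IH k Hk). unfold Rdiv. ring. }
    assert (Hex2 : ex_series (fun k => u (M + k)%nat)) by (apply ex_series_incr_n; exact Hex).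
    rewrite (Series_incr_1 _ Hex2) in E1.
    set (w := fun k => u (M + S k)%nat) in E1.
    assert (Hw : forall k, Rabs (w k) <= (K * x ^ 3 * (x / (x + 1)) ^ i / x ^ (i + 3)) * bb (M + S k)).
    { intros k. unfold w, u.
      set (y := INR (M + S k)).
      assert (Hxy : x + 1 <= y) by (unfold y, x; rewrite <- S_INR; apply le_INR; lia).
      assert (Hxp : 0 < x ^ (i + 3)) by (apply pow_lt; lra).
      apply Rle_trans with (K * y / y ^ (i + 3)).
      { unfold Rdiv. rewrite Rabs_mult, (Rabs_pos_eq (/ _)) by (apply Rlt_le, Rinv_0_lt_compat, pow_lt; lra).
        apply Rmult_le_compat_r; [apply Rlt_le, Rinv_0_lt_compat, pow_lt; lra|]. apply Hb. }
      pose proof (L2 x y i Hx Hxy) as HL.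
      apply (Rmult_le_reg_l (x ^ (i + 3))); [exact Hxp|].
      replace (x ^ (i + 3) * (K * y / y ^ (i + 3))) with (K * (x ^ (i + 3) * y / y ^ (i + 3))) by (field; apply pow_nonzero; lra).
      replace (x ^ (i + 3) * (K * x ^ 3 * (x / (x + 1)) ^ i / x ^ (i + 3) * bb (M + S k)))
        with (K * (x ^ 3 * (x / (x + 1)) ^ i / y ^ 2)) by (unfold bb; fold y; field; repeat split; first [apply pow_nonzero; lra | lra]).
      apply Rmult_le_compat_l; lra. }
    assert (Hexw : ex_series (fun k => Rabs (w k))).
    { apply (ex_series_le (fun k => Rabs (w k)) (fun k => (K * x ^ 3 * (x / (x + 1)) ^ i / x ^ (i + 3)) * bb (M + S k))).
      - intros k. unfold norm; simpl. unfold abs; simpl. rewrite Rabs_Rabsolu. apply Hw.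
      - apply ex_bb_shift. }
    assert (Hu0 : u M = - Series w).
    { pose proof (HS i) as HSi. fold u in HSi. rewrite E1 in HSi. rewrite Nat.add_0_r in HSi. lra. }
    assert (Hle : Rabs (Series w) <= (K * x ^ 3 * (x / (x + 1)) ^ i / x ^ (i + 3)) * S2).
    { apply Rle_trans with (Series (fun k => Rabs (w k))); [apply Series_Rabs; exact Hexw|].
      unfold S2. rewrite <- Series_scal_l. apply Series_le; [|].
      - intros k. split; [apply Rabs_pos| apply Hw].
      - apply ex_bb_shift. }
    assert (Hxp : 0 < x ^ (i + 3)) by (apply pow_lt; lra).
    assert (EfM : f M = u M * x ^ (i + 3)) by (unfold u; fold x; field; apply pow_nonzero; lra).
    rewrite EfM, Hu0, Rabs_mult, Rabs_Ropp, (Rabs_pos_eq (x ^ _)) by lra.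
    apply Rle_trans with ((K * x ^ 3 * (x / (x + 1)) ^ i / x ^ (i + 3)) * S2 * x ^ (i + 3)).
    { apply Rmult_le_compat_r; lra. }
    right. field. lra.
Qed.

Lemma sumS (a : nat -> R) n : @eq R (sum_n a (S n)) (sum_n a n + a (S n)).
Proof. rewrite sum_Sn. reflexivity. Qed.
Lemma sum0 (a : nat -> R) : @eq R (sum_n a 0) (a 0%nat).
Proof. rewrite sum_O. reflexivity. Qed.

Definition rho (r : nat -> R) (k : nat) : R := if (1 <=? k)%nat then r k else r 0%nat / 2.
Definition FF (r : nat -> R) (n N : nat) : R := sum_n (fun k => rho r k * (asum k N / INR N ^ k)) n.
Definition AA (r : nat -> R) (n : nat) : R := sum_n (fun k => rho r k / INR (S k)) n.
Definition BB (r : nat -> R) (n : nat) : R := sum_n (fun k => rho r k * beta k) n.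

Lemma term_ep r k N : rho r k * (asum k N / INR N ^ k) = rho r k / INR (S k) * INR N + rho r k * beta k + rho r k * ep k N.
Proof.
  unfold ep, Rdiv. ring.
Qed.

Lemma FF_asym r n : exists C, 0 <= C /\ forall N, (1 <= N)%nat ->
  Rabs (FF r n N - AA r n * INR N - BB r n) <= C / INR N.
Proof.
  induction n as [|n [C [HC IH]]].
  - destruct (ep_bound 0) as [C [HC H]]. exists (Rabs (rho r 0) * C). split.
    { apply Rmult_le_pos; [apply Rabs_pos| lra]. }
    intros N HN. unfold FF, AA, BB. rewrite !sum0, term_ep.
    replace (rho r 0 / INR 1 * INR N + rho r 0 * beta 0 + rho r 0 * ep 0 N - rho r 0 / INR 1 * INR N -
   rho r 0 * beta 0) with (rho r 0 * ep 0 N) by ring.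
    rewrite Rabs_mult. unfold Rdiv. rewrite Rmult_assoc. apply Rmult_le_compat_l; [apply Rabs_pos|].
    apply H; auto.
  - destruct (ep_bound (S n)) as [C' [HC' H]]. exists (C + Rabs (rho r (S n)) * C'). split.
    { assert (0 <= Rabs (rho r (S n)) * C') by (apply Rmult_le_pos; [apply Rabs_pos| lra]). lra. }
    intros N HN. unfold FF, AA, BB in *. rewrite !sumS, term_ep.
    set (X := sum_n (fun k : nat => rho r k * (asum k N / INR N ^ k)) n).
    set (Y := sum_n (fun k : nat => rho r k / INR (S k)) n).
    set (Z := sum_n (fun k : nat => rho r k * beta k) n).
    replace (X + (rho r (S n) / INR (S (S n)) * INR N + rho r (S n) * beta (S n) + rho r (S n) * ep (S n) N) -
             (Y + rho r (S n) / INR (S (S n))) * INR N - (Z + rho r (S n) * beta (S n)))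
      with ((X - Y * INR N - Z) + rho r (S n) * ep (S n) N) by ring.
    eapply Rle_trans; [apply Rabs_triang|].
    specialize (IH N HN). specialize (H N HN). rewrite Rabs_mult.
    assert (Rabs (rho r (S n)) * Rabs (ep (S n) N) <= Rabs (rho r (S n)) * (C' / INR N))
      by (apply Rmult_le_compat_l; [apply Rabs_pos| lra]).
    replace ((C + Rabs (rho r (S n)) * C') / INR N) with (C / INR N + Rabs (rho r (S n)) * (C' / INR N)).
    2: { unfold Rdiv. ring. }
    fold X Y Z in IH. lra.
Qed.

Lemma AB0 (A B C : R) : 0 <= C -> (forall N, (1 <= N)%nat -> Rabs (A * INR N + B) <= C / INR N) -> A = 0 /\ B = 0.
Proof.
  intros HC H.
  assert (H' : forall N, (1 <= N)%nat -> Rabs (A * INR N + B) <= C).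
  { intros N HN. specialize (H N HN). assert (Hn : 1 <= INR N) by (apply (le_INR 1); lia).
    assert (C / INR N <= C).
    { unfold Rdiv. assert (/ INR N <= 1) by (rewrite <- Rinv_1; apply Rinv_le_contravar; lra).
      assert (0 < / INR N) by (apply Rinv_0_lt_compat; lra). nra. }
    lra. }
  assert (HA : A = 0).
  { destruct (Req_dec A 0) as [|HA]; [assumption|exfalso].
    assert (HAp : 0 < Rabs A) by (apply Rabs_pos_lt; exact HA).
    destruct (INR_unbounded ((C + Rabs B) / Rabs A)) as [n Hn].
    specialize (H' (S n) ltac:(lia)).
    assert (Hb : Rabs (A * INR (S n)) <= Rabs (A * INR (S n) + B) + Rabs B).
    { replace (A * INR (S n)) with ((A * INR (S n) + B) + - B) at 1 by ring.
      eapply Rle_trans; [apply Rabs_triang|]. rewrite Rabs_Ropp. lra. }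
    rewrite Rabs_mult, (Rabs_pos_eq (INR (S n))) in Hb by apply pos_INR.
    rewrite S_INR in Hb.
    assert (Hm : (C + Rabs B) / Rabs A * Rabs A = C + Rabs B) by (field; lra).
    assert (Rabs A * INR n > (C + Rabs B) / Rabs A * Rabs A).
    { rewrite (Rmult_comm (Rabs A)). apply Rmult_lt_compat_r; lra. }
    rewrite S_INR in H'. rewrite Hm in H0. lra. }
  split; [exact HA|]. subst A.
  destruct (Req_dec B 0) as [|HB]; [assumption|exfalso].
  assert (HBp : 0 < Rabs B) by (apply Rabs_pos_lt; exact HB).
  destruct (INR_unbounded (C / Rabs B)) as [n Hn].
  specialize (H (S n) ltac:(lia)). rewrite Rmult_0_l, Rplus_0_l in H.
  assert (Hpos : 0 < INR (S n)) by (apply lt_0_INR; lia).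
  assert (Hgt : INR (S n) > C / Rabs B) by (rewrite S_INR; lra).
  assert (Rabs B * INR (S n) <= C).
  { apply (Rmult_le_compat_r (INR (S n))) in H; [|lra].
    replace (C / INR (S n) * INR (S n)) with C in H by (field; lra). lra. }
  assert (Rabs B * INR (S n) > Rabs B * (C / Rabs B)) by (apply Rmult_lt_compat_l; lra).
  replace (Rabs B * (C / Rabs B)) with C in * by (field; lra). lra.
Qed.

Lemma BB_val r n : BB r n = - sum_n r n / 2.
Proof.
  unfold BB. induction n as [|n IH].
  - rewrite !sum0. unfold rho, beta. simpl. field.
  - rewrite !sumS, IH. unfold rho, beta. simpl (1 <=? S n)%nat. cbv iota. field.
Qed.

Lemma abs_asum_div k N : Rabs (asum k N / INR N ^ k) <= INR N.
Proof.
  destruct N as [|N].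
  - simpl asum. unfold Rdiv. rewrite Rmult_0_l, Rabs_R0. simpl; lra.
  - assert (Hy : 1 <= INR (S N)) by (apply (le_INR 1); lia).
    assert (Hp : 0 < INR (S N) ^ k) by (apply pow_lt; lra).
    rewrite Rabs_pos_eq.
    2: { apply Rmult_le_pos; [apply asum_nonneg| apply Rlt_le, Rinv_0_lt_compat; lra]. }
    apply (Rmult_le_reg_r (INR (S N) ^ k)); [lra|].
    unfold Rdiv. rewrite Rmult_assoc, Rinv_l by lra. rewrite Rmult_1_r. apply asum_le.
Qed.

Lemma FF_bound r n N : Rabs (FF r n N) <= sum_n (fun k => Rabs (rho r k)) n * INR N.
Proof.
  unfold FF. induction n as [|n IH].
  - rewrite !sum0, Rabs_mult. apply Rmult_le_compat_l; [apply Rabs_pos|apply abs_asum_div].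
  - rewrite !sumS. eapply Rle_trans; [apply Rabs_triang|]. rewrite Rabs_mult.
    assert (Rabs (rho r (S n)) * Rabs (asum (S n) N / INR N ^ S n) <= Rabs (rho r (S n)) * INR N)
      by (apply Rmult_le_compat_l; [apply Rabs_pos|apply abs_asum_div]).
    lra.
Qed.

Lemma sum_nonneg (a : nat -> R) n : (forall k, 0 <= a k) -> 0 <= sum_n a n.
Proof.
  intros H. induction n; [rewrite sum0; apply H| rewrite sumS; specialize (H (S n)); lra].
Qed.

Lemma FF0 r n : FF r n 0 = 0.
Proof.
  unfold FF. induction n as [|n IH].
  - rewrite sum0. simpl asum. unfold Rdiv. ring.
  - rewrite sumS, IH. simpl asum. unfold Rdiv. ring.
Qed.

Definition DD (k p : nat) : R := Series (fun N => asum k N / INR N ^ (p + k)).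

Lemma ex_DD k i : ex_series (fun N => asum k N / INR N ^ (i + 3 + k)).
Proof.
  apply (ex_series_bound _ 1). intros N. rewrite Rmult_1_l.
  destruct N as [|N].
  - simpl asum. unfold Rdiv. rewrite Rmult_0_l, Rabs_R0. apply bb_le.
  - assert (Hy : 1 <= INR (S N)) by (apply (le_INR 1); lia).
    assert (Hp : 0 < INR (S N) ^ k) by (apply pow_lt; lra).
    assert (Hp3 : 0 < INR (S N) ^ (i + 3)) by (apply pow_lt; lra).
    rewrite pow_add.
    rewrite Rabs_pos_eq.
    2: { apply Rmult_le_pos; [apply asum_nonneg| apply Rlt_le, Rinv_0_lt_compat; nra]. }
    apply Rle_trans with (INR (S N) / INR (S N) ^ (i + 3)); [|apply L1; lra].
    apply (Rmult_le_reg_r (INR (S N) ^ (i + 3) * INR (S N) ^ k)); [nra|].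
    replace (asum k (S N) / (INR (S N) ^ (i + 3) * INR (S N) ^ k) * (INR (S N) ^ (i + 3) * INR (S N) ^ k))
      with (asum k (S N)) by (field; lra).
    replace (INR (S N) / INR (S N) ^ (i + 3) * (INR (S N) ^ (i + 3) * INR (S N) ^ k))
      with (INR (S N) * INR (S N) ^ k) by (field; lra).
    apply asum_le.
Qed.

Lemma lin (u : nat -> nat -> R) (c : nat -> R) n : (forall k, ex_series (u k)) ->
  ex_series (fun N => sum_n (fun k => c k * u k N) n) /\
  sum_n (fun k => c k * Series (u k)) n = Series (fun N => sum_n (fun k => c k * u k N) n).
Proof.
  intros Hu. induction n as [|n [IH1 IH2]].
  - split.
    + apply (ex_series_ext (fun N => c 0%nat * u 0%nat N)). { intros; now rewrite sum0. }
      apply (ex_series_scal_l (c 0%nat) (u 0%nat)). apply Hu.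
    + rewrite sum0, <- Series_scal_l. apply Series_ext. intros; now rewrite sum0.
  - assert (E : forall N, sum_n (fun k => c k * u k N) (S n) = sum_n (fun k => c k * u k N) n + c (S n) * u (S n) N)
      by (intros; apply sumS).
    assert (Hs : ex_series (fun N => c (S n) * u (S n) N)) by (apply (ex_series_scal_l (c (S n)) (u (S n))); apply Hu).
    split.
    + apply (ex_series_ext (fun N => plus (sum_n (fun k => c k * u k N) n) (c (S n) * u (S n) N))).
      { intros; now rewrite E. }
      apply (ex_series_plus (fun N => sum_n (fun k => c k * u k N) n) (fun N => c (S n) * u (S n) N)); assumption.
    + rewrite sumS, IH2, <- Series_scal_l, <- Series_plus by assumption.
      apply Series_ext. intros; now rewrite E.
Qed.

Lemma sum_div (a : nat -> R) (d : R) n : @eq R (sum_n (fun k => a k / d) n) (sum_n a n / d).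
Proof.
  induction n as [|n IH]; [rewrite !sum0; reflexivity| rewrite !sumS, IH; unfold Rdiv; ring].
Qed.

Lemma ML (r : nat -> R) n :
  (forall i, sum_n (fun k => if (1 <=? k)%nat then r k * DD k (i + 3) else 0) n + r 0%nat * DD 0 (i + 3) / 2 = 0) ->
  sum_n r n = 0.
Proof.
  intros H.
  assert (H2 : forall i, Series (fun N => FF r n N / INR N ^ (i + 3)) = 0).
  { intros i. specialize (H i).
    assert (E1 : sum_n (fun k => if (1 <=? k)%nat then r k * DD k (i + 3) else 0) n + r 0%nat * DD 0 (i + 3) / 2
               = sum_n (fun k => rho r k * DD k (i + 3)) n).
    { clear H. induction n as [|n IH].
      - rewrite !sum0. unfold rho. simpl. field.
      - rewrite !sumS. rewrite <- IH. unfold rho. simpl (1 <=? S n)%nat. cbv iota. ring. }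
    rewrite E1 in H. unfold DD in H.
    destruct (lin (fun k N => asum k N / INR N ^ (i + 3 + k)) (rho r) n) as [_ E2].
    { intros k. apply ex_DD. }
    rewrite E2 in H. rewrite <- H. apply Series_ext. intros N. unfold FF.
    rewrite <- sum_div. apply sum_n_ext. intros k. match goal with |- ?a = ?b => change (@eq R a b) end.
    destruct N as [|N].
    - simpl asum. unfold Rdiv. ring.
    - assert (Hy : 0 < INR (S N)) by (apply lt_0_INR; lia).
      rewrite (pow_add (INR (S N)) (i + 3) k). field. split; apply pow_nonzero; lra. }
  assert (HF : forall N, FF r n N = 0).
  { apply (DU (FF r n) (sum_n (fun k => Rabs (rho r k)) n)).
    - apply sum_nonneg. intros; apply Rabs_pos.
    - apply FF0.
    - intros; apply FF_bound.
    - exact H2. }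
  destruct (FF_asym r n) as [C [HC HA]].
  destruct (AB0 (- AA r n) (- BB r n) C HC) as [_ HB].
  { intros N HN. specialize (HA N HN). rewrite HF in HA.
    replace (- AA r n * INR N + - BB r n) with (0 - AA r n * INR N - BB r n) by ring. exact HA. }
  rewrite BB_val in HB. lra.
Qed.

Lemma Re_sum (f : nat -> Complex.C) n : Re (sum_n f n) = sum_n (fun k => Re (f k)) n.
Proof.
  induction n as [|n IH].
  - rewrite sum0. rewrite sum_O. reflexivity.
  - rewrite sumS, sum_Sn. simpl. rewrite <- IH. reflexivity.
Qed.

Lemma Im_sum (f : nat -> Complex.C) n : Im (sum_n f n) = sum_n (fun k => Im (f k)) n.
Proof.
  induction n as [|n IH].
  - rewrite sum0. rewrite sum_O. reflexivity.
  - rewrite sumS, sum_Sn. simpl. rewrite <- IH. reflexivity.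
Qed.

Lemma asum_sum k N : asum k N = sum_n (fun m => if (1 <=? m)%nat then INR m ^ k else 0) (N - 1).
Proof.
  destruct N as [|M].
  - simpl. rewrite sum0. reflexivity.
  - replace (S M - 1)%nat with M by lia. induction M as [|M IH].
    + rewrite sum0. simpl. ring.
    + rewrite asum_S, IH, sumS. reflexivity.
Qed.

Lemma npow_real N p k : npow_neg N (Cplus (INR p, 0) (RtoC (INR k))) = (exp (- (INR p + INR k) * ln (INR N)), 0).
Proof.
  unfold npow_neg, Cplus, RtoC. simpl.
  replace (- (0 + 0) * ln (INR N)) with 0 by ring. rewrite cos_0, sin_0. f_equal; ring.
Qed.

Lemma exp_pow N p k : (1 <= N)%nat -> exp (- (INR p + INR k) * ln (INR N)) = / INR N ^ (p + k).
Proof.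
  intros HN. assert (Hy : 0 < INR N) by (apply lt_0_INR; lia).
  replace (- (INR p + INR k) * ln (INR N)) with (- (INR (p + k) * ln (INR N))) by (rewrite plus_INR; ring).
  rewrite exp_Ropp. f_equal. rewrite <- Rpower_pow by exact Hy. reflexivity.
Qed.

Lemma dz_term_real k p N :
  dz_term k (INR p, 0) N = (asum k N / INR N ^ (p + k), 0).
Proof.
  unfold dz_term. rewrite npow_real.
  match goal with |- context [sum_n ?f (N - 1)] => set (g := f) end.
  assert (HR : Re (sum_n g (N - 1)) = asum k N).
  { rewrite Re_sum, asum_sum. apply sum_n_ext. intros m. unfold g. destruct (1 <=? m)%nat; reflexivity. }
  assert (HI : Im (sum_n g (N - 1)) = 0).
  { rewrite Im_sum. transitivity (sum_n (fun _ : nat => 0) (N - 1)).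
    - apply sum_n_ext. intros m. unfold g. destruct (1 <=? m)%nat; reflexivity.
    - clear. induction (N - 1)%nat as [|n IH]; [rewrite sum0; reflexivity| rewrite sumS, IH; ring]. }
  destruct (sum_n g (N - 1)) as [a b]. simpl in HR, HI. subst a b.
  destruct N as [|N].
  - unfold Cmult. simpl. f_equal; unfold Rdiv; ring.
  - rewrite exp_pow by lia. unfold Cmult. simpl. f_equal; unfold Rdiv; ring.
Qed.

Lemma Series_zero : Series (fun _ : nat => 0) = 0.
Proof.
  transitivity (Series (fun n : nat => 0 * (fun _ : nat => 0) n)).
  - apply Series_ext. intros; ring.
  - rewrite (Series_scal_l 0 (fun _ : nat => 0)). ring.
Qed.

Lemma dzeta_real k p : dzeta k (INR p, 0) = (DD k p, 0).
Proof.
  unfold dzeta, CSeries, DD. f_equal.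
  - apply Series_ext. intros N. rewrite dz_term_real. reflexivity.
  - transitivity (Series (fun _ : nat => 0)); [|apply Series_zero]. apply Series_ext. intros N. rewrite dz_term_real. reflexivity.
Qed.

Lemma Re_plus (a b : Complex.C) : Re (Cplus a b) = Re a + Re b.
Proof. reflexivity. Qed.
Lemma Im_plus (a b : Complex.C) : Im (Cplus a b) = Im a + Im b.
Proof. reflexivity. Qed.

Lemma Cmult_real (z : Complex.C) (d : R) : Cmult z (d, 0) = (Re z * d, Im z * d).
Proof. destruct z as [x y]. unfold Cmult. simpl. f_equal; ring. Qed.

Lemma Cdiv2 (w : Complex.C) : Cdiv w (RtoC 2) = (Re w / 2, Im w / 2).
Proof. destruct w as [x y]. unfold Cdiv, Cmult, Cinv, RtoC. simpl. f_equal; field. Qed.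

Theorem corollary5p2 (m : nat) (hm : (0 < m)%nat) (c : nat -> Complex.C) :
  (forall s : Complex.C, 2 < Re s ->
     Cplus (sum_n (fun k => if (1 <=? k)%nat then Cmult (c k) (dzeta k s) else RtoC 0)
                  (2 * m + 1))
           (Cdiv (Cmult (c 0%nat) (dzeta 0 s)) (RtoC 2)) = RtoC 0) ->
  sum_n c (2 * m + 1) = RtoC 0.
Proof.
  intros H.
  set (n := (2 * m + 1)%nat) in *.
  assert (Hs : forall i, Cplus (sum_n (fun k => if (1 <=? k)%nat then Cmult (c k) (DD k (i + 3), 0) else RtoC 0) n)
     (Cdiv (Cmult (c 0%nat) (DD 0 (i + 3), 0)) (RtoC 2)) = RtoC 0).
  { intros i. specialize (H (INR (i + 3), 0)).
    assert (Hgt : 2 < Re (INR (i + 3), 0)).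
    { simpl. rewrite plus_INR. pose proof (pos_INR i). simpl. lra. }
    specialize (H Hgt). etransitivity; [|exact H]. rewrite (dzeta_real 0). f_equal.
    apply sum_n_ext. intros k. rewrite dzeta_real. reflexivity. }
  assert (HR : sum_n (fun k => Re (c k)) n = 0).
  { apply ML. intros i. specialize (Hs i). apply (f_equal Re) in Hs.
    rewrite Re_plus, Re_sum, Cdiv2, Cmult_real in Hs. simpl in Hs |- *.
    etransitivity; [|exact Hs]. f_equal.
    apply sum_n_ext. intros k. destruct k as [|k]; [reflexivity|]. simpl. unfold Re, Im. ring. }
  assert (HI : sum_n (fun k => Im (c k)) n = 0).
  { apply ML. intros i. specialize (Hs i). apply (f_equal Im) in Hs.
    rewrite Im_plus, Im_sum, Cdiv2, Cmult_real in Hs. simpl in Hs |- *.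
    etransitivity; [|exact Hs]. f_equal.
    apply sum_n_ext. intros k. destruct k as [|k]; [reflexivity|]. simpl. unfold Re, Im. ring. }
  apply injective_projections.
  - change (Re (sum_n c n) = Re (RtoC 0)). rewrite Re_sum, HR. reflexivity.
  - change (Im (sum_n c n) = Im (RtoC 0)). rewrite Im_sum, HI. reflexivity.
Qed.
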